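(* Let $p$ be an odd prime and let $n,s$ be positive integers such that $2n/s\geq 3$ is an odd integer; put $q=p^n$, $d=p^s$. Fix $\mu\in\mathbb{F}_{q^2}\setminus\mathbb{F}_q$ such that $\mu^d=u_1+u_2\mu$ with $u_1,u_2\in\mathbb{F}_q$ and $u_2$ a $(d-1)$-th power in $\mathbb{F}_{q^2}$. Fix a partition $\mathbb{F}_q^*=\mathbb{F}_q^+\cup\mathbb{F}_q^-$ such that $a\in\mathbb{F}_q^+$ iff $-a\in\mathbb{F}_q^-$. Then \[ I^+=\{(a^d+a,\,x_1+x_2\mu): a,x_1\in\mathbb{F}_q,\ x_2\in\mathbb{F}_q^+\} \] is an independent set in $\mathcal{A}_{q^2,d}$, and likewise $I^-=\{(a^d+a,\,x_1+x_2\mu): a,x_1\in\mathbb{F}_q,\ x_2\in\mathbb{F}_q^-\}$ is an independent set in $\mathcal{A}_{q^2,d}$.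
   Context: The map $x\mapsto x^d+x$ is a bijection of $\mathbb{F}_{q^2}$. The graph $\mathcal{A}_{q^2,d}$ has vertex set $\mathbb{F}_{q^2}\times\mathbb{F}_{q^2}$; writing vertices as $(a^d+a,x)$ and $(b^d+b,y)$ with $a,b,x,y\in\mathbb{F}_{q^2}$ (uniquely), two distinct vertices are adjacent iff $a^db+ab^d=x+y$. $\mathbb{F}_q$ is the subfield of $\mathbb{F}_{q^2}$ of order $q$. *)

(* Defs.v *)
From HB Require Import structures.
From mathcomp Require Import all_boot all_order all_algebra all_field.
Set Implicit Arguments. Unset Strict Implicit. Unset Printing Implicit Defensive.
Import GRing.Theory.
Local Open Scope ring_scope.

Definition in_subfield (F : finFieldType) (q : nat) (x : F) : bool := x ^+ q == x.

(* Adjacency in A_{q^2,d}: vertices are pairs (u, x) in F x F; writing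
   u = a^d + a, u' = b^d + b (unique since x |-> x^d + x is a bijection),
   two distinct vertices are adjacent iff a^d b + a b^d = x + y. *)
Definition A_adj (F : finFieldType) (d : nat) (v w : F * F) : Prop :=
  v <> w /\
  exists a b : F, v.1 = a ^+ d + a /\ w.1 = b ^+ d + b /\
                  a ^+ d * b + a * b ^+ d = v.2 + w.2.

Definition independent_set (F : finFieldType) (d : nat) (I : F * F -> Prop) : Prop :=
  forall v w, I v -> I w -> ~ A_adj d v w.

Definition I_set (F : finFieldType) (q d : nat) (mu : F) (Fsign : pred F)
  (v : F * F) : Prop :=
  exists a x1 x2 : F, in_subfield q a /\ in_subfield q x1 /\ Fsign x2 /\
    v = (a ^+ d + a, x1 + x2 * mu).

(* Main.v *)
Require Import Defs.
From HB Require Import structures.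
From mathcomp Require Import all_boot all_order all_algebra all_field.
Import GRing.Theory.
Local Open Scope ring_scope.
Set Implicit Arguments. Unset Strict Implicit.
From mathcomp Require Import ring.

Section Aux.
Variables (F : finFieldType) (p : nat).
Hypothesis pc : p \in [pchar F].

Lemma pnat_k k : [pchar F].-nat (p ^ k)%N.
Proof.
rewrite (eq_pnat _ (pcharf_eq pc)) pnatX pnat_id ?orbT //.
exact: pcharf_prime pc.
Qed.

Lemma frobD k (x y : F) : (x + y) ^+ (p ^ k) = x ^+ (p ^ k) + y ^+ (p ^ k).
Proof. exact: exprDn_pchar (pnat_k k). Qed.

Lemma frobN k (x : F) : (- x) ^+ (p ^ k) = - x ^+ (p ^ k).
Proof. exact: exprNn_pchar (pnat_k k). Qed.

Lemma frobB k (x y : F) : (x - y) ^+ (p ^ k) = x ^+ (p ^ k) - y ^+ (p ^ k).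
Proof. by rewrite frobD frobN. Qed.

Lemma sub_add k (x y : F) : in_subfield (p ^ k) x -> in_subfield (p ^ k) y ->
  in_subfield (p ^ k) (x + y).
Proof. by rewrite /in_subfield frobD => /eqP -> /eqP ->. Qed.

Lemma sub_opp k (x : F) : in_subfield (p ^ k) x -> in_subfield (p ^ k) (- x).
Proof. by rewrite /in_subfield frobN => /eqP ->. Qed.

Lemma sub_mul k (x y : F) : in_subfield (p ^ k) x -> in_subfield (p ^ k) y ->
  in_subfield (p ^ k) (x * y).
Proof. by rewrite /in_subfield exprMn => /eqP -> /eqP ->. Qed.

Lemma sub_exp k m (x : F) : in_subfield (p ^ k) x -> in_subfield (p ^ k) (x ^+ m).
Proof. by rewrite /in_subfield -exprM mulnC exprM => /eqP ->. Qed.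

Lemma sub_inv k (x : F) : in_subfield (p ^ k) x -> in_subfield (p ^ k) (x^-1).
Proof. by rewrite /in_subfield exprVn => /eqP ->. Qed.
End Aux.

Lemma inj_dd (F : finFieldType) (p n s : nat) (pc : p \in [pchar F])
  (Hpodd : odd p) (Hdiv : (s %| 2 * n)%N) (Hodd : odd (2 * n %/ s))
  (HF : #|F| = (p ^ (2 * n))%N) (a b : F) :
  a ^+ (p ^ s) + a = b ^+ (p ^ s) + b -> a = b.
Proof.
move=> E; set z := a - b.
have Hz : z ^+ (p ^ s) = - z.
  rewrite /z frobB //; apply/eqP; rewrite opprB subr_eq addrAC eq_sym subr_eq.
  by rewrite addrC E addrC.
have Hj : forall j, z ^+ (p ^ (s * j)) = (-1) ^+ j * z.
  elim=> [|j IH]; first by rewrite muln0 expn0 expr1 expr0 mul1r.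
  rewrite mulnS expnD mulnC exprM IH exprMn Hz exprAC.
  have od : odd (p ^ s) by rewrite oddX Hpodd orbT.
  by rewrite -[(-1) ^+ (p ^ s)]signr_odd od expr1 exprS mulrN mulN1r mulNr.
have := Hj (2 * n %/ s)%N; rewrite mulnC divnK // -HF expf_card -signr_odd Hodd expr1 mulN1r.
move/eqP; rewrite -subr_eq0 opprK -mulr2n -mulr_natr mulf_eq0 => /orP[z0|].
  by apply/eqP; rewrite -subr_eq0; exact: z0.
rewrite -(dvdn_pcharf pc) => /(dvdn_leq (isT : (0 < 2)%N)); rewrite leq_eqVlt => /orP[/eqP p2|].
  by rewrite p2 in Hpodd.
rewrite ltnS leq_eqVlt ltnS leqn0 => /orP[] /eqP p0.
  by move: (pcharf_prime pc); rewrite p0.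
by move: (pcharf_prime pc); rewrite p0.
Qed.

Lemma key (F : finFieldType) (p n s : nat) (pc : p \in [pchar F])
  (Hpodd : odd p) (Hdiv : (s %| 2 * n)%N) (Hodd : odd (2 * n %/ s))
  (HF : #|F| = (p ^ (2 * n))%N) (mu : F) (Hmu : ~~ in_subfield (p ^ n) mu)
  (S : pred F) (HS : forall a, S a -> in_subfield (p ^ n) a)
  (v w : F * F) :
  I_set (p ^ n) (p ^ s) mu S v -> I_set (p ^ n) (p ^ s) mu S w ->
  A_adj (p ^ s) v w ->
  exists x2 y2, [/\ S x2, S y2 & y2 = - x2].
Proof.
move=> [a [x1 [x2 [Ha [Hx1 [Hx2 ->]]]]]] [b [y1 [y2 [Hb [Hy1 [Hy2 ->]]]]]].
move=> [_ [a' [b' [/= Ea [Eb E]]]]].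
have aa := inj_dd pc Hpodd Hdiv Hodd HF Ea; have bb := inj_dd pc Hpodd Hdiv Hodd HF Eb.
subst a' b'.
exists x2, y2; split => //.
have hx2 := HS _ Hx2; have hy2 := HS _ Hy2.
have [e0|ne0] := eqVneq (x2 + y2) 0.
  by apply/eqP; rewrite -subr_eq0 opprK addrC e0.
exfalso; move/negP: Hmu; apply.
set c := a ^+ (p ^ s) * b + a * b ^+ (p ^ s) - x1 - y1.
have Ec : mu = c / (x2 + y2).
  apply/(mulIf ne0); rewrite -mulrA mulVf // mulr1 /c E; ring.
have Hc : in_subfield (p ^ n) c.
  rewrite /c; apply: (sub_add pc); last exact: (sub_opp pc).
  apply: (sub_add pc); last exact: (sub_opp pc).
  by apply: (sub_add pc); apply: sub_mul => //; exact: sub_exp.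
rewrite Ec; apply: sub_mul => //; apply: sub_inv; exact: (sub_add pc).
Qed.

Unset Implicit Arguments.

Theorem lemma7 (p n s : nat) (F : finFieldType)
  (Hp : prime p) (Hpodd : odd p) (Hn : (0 < n)%N) (Hs : (0 < s)%N)
  (Hdiv : (s %| 2 * n)%N) (Hodd : odd (2 * n %/ s)) (H3 : (3 <= 2 * n %/ s)%N)
  (HF : #|F| = ((p ^ n) ^ 2)%N)
  (mu u1 u2 : F)
  (Hmu : ~~ in_subfield (p ^ n) mu)
  (Hu1 : in_subfield (p ^ n) u1) (Hu2 : in_subfield (p ^ n) u2)
  (Hmud : mu ^+ (p ^ s) = u1 + u2 * mu)
  (Hu2pow : exists w : F, u2 = w ^+ (p ^ s - 1))
  (Fplus Fminus : pred F)
  (Hpart : forall a : F, in_subfield (p ^ n) a -> a != 0 ->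
             (a \in Fplus) (+) (a \in Fminus))
  (Hplus_sub : forall a : F, a \in Fplus -> in_subfield (p ^ n) a && (a != 0))
  (Hminus_sub : forall a : F, a \in Fminus -> in_subfield (p ^ n) a && (a != 0))
  (Hsym : forall a : F, (a \in Fplus) = (- a \in Fminus)) :
  independent_set (p ^ s) (I_set (p ^ n) (p ^ s) mu Fplus) /\
  independent_set (p ^ s) (I_set (p ^ n) (p ^ s) mu Fminus).
Proof.
have HF' : #|F| = (p ^ (2 * n))%N by rewrite HF -expnM mulnC.
have pc : p \in [pchar F] := card_finPcharP HF' Hp.
have HSp : forall a : F, Fplus a -> in_subfield (p ^ n) a.
  by move=> a /Hplus_sub /andP[].
have HSm : forall a : F, Fminus a -> in_subfield (p ^ n) a.
  by move=> a /Hminus_sub /andP[].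
split=> v w Iv Iw Adj.
  have [x2 [y2 [X Y Ey]]] := key pc Hpodd Hdiv Hodd HF' Hmu HSp Iv Iw Adj.
  subst y2.
  have Y' : - x2 \in Fplus by [].
  have X' : x2 \in Fplus by [].
  move: (X'); rewrite Hsym => Ym.
  have /andP[s1 s2] := Hplus_sub _ Y'.
  by move: (Hpart _ s1 s2); rewrite Y' Ym.
have [x2 [y2 [X Y Ey]]] := key pc Hpodd Hdiv Hodd HF' Hmu HSm Iv Iw Adj.
subst y2.
have Y' : - x2 \in Fminus by [].
have X' : x2 \in Fminus by [].
have Yp : - x2 \in Fplus by rewrite Hsym opprK.
have /andP[s1 s2] := Hminus_sub _ Y'.
by move: (Hpart _ s1 s2); rewrite Y' Yp.
Qed.
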